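(* Let $A$ be a finite set of integers with $|A|\ge 3$. Then $$|S_2(A)|=(|A|-1)\cdot 2-3\binom 22+1=2|A|-4$$ if and only if one of the following (i)–(v) holds. (i) $A=\{c,\pm d\}$ for some $c\in\mathbb Z$ and $d\in\mathbb Z^+$ with $|c|\neq d$. (ii) $A=\{\pm c,\pm d\}$ for some $c,d\in\mathbb Z^+$ with $c\neq d$. (iii) $A=\{\pm d\}\cup \{c\pm d\}$ for some $c\in\mathbb Z$ and $d\in\mathbb Z^+$ with $c\neq 0,\pm 2d$. (iv) $A=\{rd:\ s\le r\le t\}$ for some integers $d\neq0$, $s\le-1$ and $t\ge1$ with $t-s\ge4$. (v) $A=\{(2r-1)d:\ s\le r\le t\}$ for some integers $d\neq0$, $s\le0$ and $t\ge 1$ with $t-s\ge4$.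
   Context: For a finite set $A\subseteq\mathbb Z$ and a positive integer $n$, define the restricted sumset $$S_n(A)=\{a_1+\cdots+a_n:\ a_1,\ldots,a_n\in A,\ \text{and}\ a_i^2\neq a_j^2\ \text{for}\ 1\le i<j\le n\}.$$ Notation: $\{\pm d\}=\{d,-d\}$, $\{c\pm d\}=\{c+d,c-d\}$, $\mathbb Z^+=\{1,2,3,\ldots\}$. *)

(* Defs.v *)
From HB Require Import structures.
From mathcomp Require Import all_boot all_order all_algebra.
From mathcomp Require Import finmap.
Set Implicit Arguments. Unset Strict Implicit. Unset Printing Implicit Defensive.
Import Order.TTheory GRing.Theory Num.Theory.
Local Open Scope ring_scope.
Local Open Scope fset_scope.

Fixpoint all_tuples (n : nat) (A : seq int) : seq (seq int) :=
  match n with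
  | O => [:: [::]]
  | S m => [seq a :: s | a <- A, s <- all_tuples m A]
  end.

Definition restricted_sumset (n : nat) (A : {fset int}) : {fset int} :=
  [fset \sum_(x <- s) x | s in [seq s <- all_tuples n A
                                 | pairwise (fun x y : int => x ^+ 2 != y ^+ 2) s]].

(* { r d : s <= r <= t }, for s <= t *)
Definition ap_set (d s t : int) : {fset int} :=
  [fset (s + (k%:Z)) * d | k in iota 0 (`|t - s|%N).+1].

(* { (2r-1) d : s <= r <= t }, for s <= t *)
Definition odd_ap_set (d s t : int) : {fset int} :=
  [fset (2 * (s + (k%:Z)) - 1) * d | k in iota 0 (`|t - s|%N).+1].

(* Main.v *)
Require Import Defs.
From HB Require Import structures.
From mathcomp Require Import all_boot all_order all_algebra.
From mathcomp Require Import finmap.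
Import Order.TTheory GRing.Theory Num.Theory.
Local Open Scope ring_scope.
Local Open Scope fset_scope.
From mathcomp Require Import zify.
Local Open Scope ring_scope.

Definition S2 (A : {fset int}) := restricted_sumset 2 A.

Lemma tup2P (A : {fset int}) s : s \in all_tuples 2 A ->
  exists a b, [/\ s = [:: a; b], a \in A & b \in A].
Proof.
move=> H; have [a [t [Ha Ht ->]]] := allpairsPdep H.
have [b [u [Hb Hu ->]]] := allpairsPdep Ht.
by move: Hu; rewrite inE => /eqP ->; exists a, b.
Qed.

Lemma tup2_mem (A : {fset int}) a b : a \in A -> b \in A -> [:: a; b] \in all_tuples 2 A.
Proof.
move=> Ha Hb.
have H1 : [:: b] \in all_tuples 1 A.
  by apply/allpairsPdep; exists b, [::]; split.
by apply/allpairsPdep; exists a, [:: b]; split.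
Qed.

Lemma S2P (A : {fset int}) (z : int) :
  reflect (exists (a b : int), [/\ a \in A, b \in A, a != b, (a != - b)%R & z = (a + b)%R])
          (z \in S2 A).
Proof.
rewrite /S2 /restricted_sumset; apply: (iffP idP).
- move/imfsetP => [s]; rewrite /= mem_filter => /andP [Hp Hs] ->.
  have [a [b [Es Ha Hb]]] := @tup2P A s Hs; subst s.
  move: Hp => /=; rewrite !andbT => Hab.
  move: Hab; rewrite eqf_sqr negb_or => /andP [H1 H2].
  exists a, b; split => //.
  by rewrite big_cons big_cons big_nil addr0.
- move=> [a [b [Ha Hb H1 H2 ->]]].
  apply/imfsetP; exists [:: a; b]; last by rewrite big_cons big_cons big_nil addr0.
  rewrite /= mem_filter /= andbT eqf_sqr negb_or H1 H2 /=.
  exact: (@tup2_mem A a b).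
Qed.

Lemma S2_mono (A B : {fset int}) : A `<=` B -> S2 A `<=` S2 B.
Proof.
move=> sAB; apply/fsubsetP => z /S2P [a [b [Ha Hb H1 H2 ->]]].
apply/S2P; exists a, b; split => //; exact: (fsubsetP sAB).
Qed.

Lemma S2_in (A : {fset int}) a b : a \in A -> b \in A -> a != b -> (a != - b)%R ->
  (a + b)%R \in S2 A.
Proof. by move=> Ha Hb H1 H2; apply/S2P; exists a, b. Qed.

Definition negS (A : {fset int}) : {fset int} := [fset (- a)%R | a in A].

Lemma in_negS A z : (z \in negS A) = ((- z)%R \in A).
Proof.
apply/imfsetP/idP => /=.
- by move=> [a Ha ->]; rewrite opprK.
- by move=> H; exists (- z)%R => //; rewrite opprK.
Qed.

Lemma card_negS A : #|` negS A| = #|` A|.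
Proof. by rewrite /negS card_imfset //=; exact: oppr_inj. Qed.

Lemma negSK A : negS (negS A) = A.
Proof. by apply/fsetP => z; rewrite !in_negS opprK. Qed.

Lemma S2_neg A : S2 (negS A) = negS (S2 A).
Proof.
apply/fsetP => z; rewrite in_negS; apply/S2P/S2P.
- move=> [a [b [Ha Hb H1 H2 ->]]]; exists (- a)%R, (- b)%R.
  rewrite -!in_negS; split => //; try lia.
- move=> [a [b [Ha Hb H1 H2 E]]]; exists (- a)%R, (- b)%R.
  rewrite !in_negS !opprK; split => //; try lia.
Qed.

Lemma card_S2_neg A : #|` S2 (negS A)| = #|` S2 A|.
Proof. by rewrite S2_neg card_negS. Qed.

Lemma card_add1 (B C : {fset int}) y :
  B `<=` C -> y \in C -> y \notin B -> B `<=` C `\ y /\ #|` C| = (#|` C `\ y|).+1.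
Proof.
move=> sBC yC yB; split; last by rewrite (cardfsD1 y C) yC.
apply/fsubsetP => z zB; rewrite in_fsetD1 (fsubsetP sBC) // andbT.
by apply/eqP => E; subst z; rewrite zB in yB.
Qed.

Lemma seq_max (s : seq int) : s != [::] -> exists2 c, c \in s & forall u, u \in s -> (u <= c)%R.
Proof.
elim: s => [|a s IH] // _.
case: (altP (s =P [::])) => [->|ns].
  by exists a; rewrite ?inE // => u; rewrite inE => /eqP ->.
have [c cs Hc] := IH ns.
case: (lerP a c) => Hac.
  by exists c; rewrite ?inE ?cs ?orbT // => u; rewrite inE => /orP [/eqP ->|/Hc].
exists a; rewrite ?inE ?eqxx // => u; rewrite inE => /orP [/eqP ->|/Hc] //.
move=> H; apply: (le_trans H); exact: ltW.
Qed.

Lemma fset_max (U : {fset int}) : (0 < #|` U|)%N -> exists2 c, c \in U & forall u, u \in U -> (u <= c)%R.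
Proof.
move=> H; have [|c cs Hc] := @seq_max U.
  by apply/eqP => E; move: H; rewrite -[#|` U|]/(size (enum_fset U)) E.
by exists c.
Qed.


Lemma step (A : {fset int}) (x : int) :
  x \in A -> (0 < x)%R -> (forall a : int, a \in A -> (- x <= a)%R /\ (a <= x)%R) -> (4 <= #|` A|)%N ->
  (#|` S2 (A `\ x)| + 2 <= #|` S2 A|)%N /\
  (forall a b1 b2 : int, a \in A `\ x -> b1 \in A `\ x -> b2 \in A `\ x ->
     (a != - x)%R -> (b1 != - x)%R -> (b2 != - x)%R -> b1 != b2 -> (a < b1)%R -> (a < b2)%R ->
     (x + a)%R \notin S2 (A `\ x) -> (#|` S2 (A `\ x)| + 3 <= #|` S2 A|)%N).
Proof.
move=> xA xpos Hb cA.
set A' := A `\ x.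
set U := A' `\ (- x)%R.
have cU : (2 <= #|` U|)%N.
  have e1 : #|` A| = ((x \in A) + #|` A'|)%N := cardfsD1 _ _.
  have e2 : #|` A'| = (((- x)%R \in A') + #|` U|)%N := cardfsD1 _ _.
  move: cA; rewrite e1 e2 xA.
  by case: (_ \in A') => /=; lia.
have UP : forall u : int, u \in U -> [/\ u \in A, u != x, u != (- x)%R, (- x < u)%R & (u < x)%R].
  move=> u; rewrite !in_fsetD1 => /and3P [H1 H2 H3].
  have [H4 H5] := Hb u H3.
  split => //; lia.
have [c1 c1U Hc1] : exists2 c : int, c \in U & forall u : int, u \in U -> (u <= c)%R := @fset_max U (ltnW cU).
have [_ _ _ _ c1x] := UP c1 c1U.
set U1 := U `\ c1.
have [c2 c2U1 Hc2] : exists2 c : int, c \in U1 & forall u : int, u \in U1 -> (u <= c)%R.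
  apply: fset_max; move: cU; rewrite (cardfsD1 c1 U) c1U -/U1; lia.
have c2U : c2 \in U by move: c2U1; rewrite in_fsetD1 => /andP [].
have c21 : (c2 < c1)%R.
  move: c2U1; rewrite in_fsetD1 => /andP [H1 _].
  have := Hc1 _ c2U; lia.
have K : forall c : int, c \in U -> (c2 <= c)%R -> (x + c)%R \notin S2 A'.
  move=> c cU' Hc; apply/negP => /S2P [u [v [Hu Hv H1 H2 E]]].
  have [cA' cx cnx cl cr] := UP c cU'.
  have Hu' : u \in A by move: Hu; rewrite in_fsetD1 => /andP [].
  have Hv' : v \in A by move: Hv; rewrite in_fsetD1 => /andP [].
  have ux : u != x by move: Hu; rewrite in_fsetD1 => /andP [].
  have vx : v != x by move: Hv; rewrite in_fsetD1 => /andP [].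
  have [Hu1 Hu2] := Hb u Hu'.
  have [Hv1 Hv2] := Hb v Hv'.
  case: (altP (u =P (- x)%R)) => [eu|nu].
    by clear -E eu cl Hv2 vx; lia.
  case: (altP (v =P (- x)%R)) => [ev|nv].
    by clear -E ev cl Hu2 ux; lia.
  have uU : u \in U by rewrite !in_fsetD1 nu ux Hu'.
  have vU : v \in U by rewrite !in_fsetD1 nv vx Hv'.
  have Hu3 := Hc1 u uU.
  have Hv3 := Hc1 v vU.
  have [_ _ _ _ c2x] := UP c2 c2U.
  case: (ltrP u v) => Huv.
    have uU1 : u \in U1.
      rewrite in_fsetD1 uU andbT; apply/eqP => E'.
      by clear -E' Huv Hv3; lia.
    have := Hc2 u uU1.
    by move=> Hu4; clear -E Hv3 Hc c1x Hu4; lia.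
  have vU1 : v \in U1.
    rewrite in_fsetD1 vU andbT; apply/eqP => E'.
    by clear -E' Huv Hu3 H1; lia.
  have := Hc2 v vU1.
  by move=> Hv4; clear -E Hu3 Hc c1x Hv4; lia.
have sub : S2 A' `<=` S2 A by apply: S2_mono; exact: fsubD1set.
have inS : forall c : int, c \in U -> (x + c)%R \in S2 A.
  move=> c cU'; have [cA' cx cnx _ _] := UP c cU'.
  apply: S2_in => //; first by rewrite eq_sym.
  by apply/eqP => E; move: cnx; rewrite E opprK eqxx.
have n1 := K c1 c1U (ltW c21).
have n2 := K c2 c2U (lexx _).
have [sub1 E1] := @card_add1 _ _ _ sub (inS c1 c1U) n1.
have y2in : (x + c2)%R \in S2 A `\ (x + c1)%R.
  rewrite in_fsetD1 inS // andbT; apply/eqP => E.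
  by clear -E c21; lia.
have [sub2 E2] := @card_add1 _ _ _ sub1 y2in n2.
have L2 := fsubset_leq_card sub2.
split.
  by rewrite E1 E2; clear -L2; lia.
move=> a b1 b2 aA' b1A' b2A' an b1n b2n b12 ab1 ab2 na.
have aU : a \in U by rewrite in_fsetD1 an aA'.
have ac2 : (a < c2)%R.
  have b1U : b1 \in U by rewrite in_fsetD1 b1n b1A'.
  have b2U : b2 \in U by rewrite in_fsetD1 b2n b2A'.
  case: (altP (b1 =P c1)) => [e1|ne1].
    have b2U1 : b2 \in U1.
      rewrite in_fsetD1 b2U andbT; apply/eqP => E.
      by move: b12; rewrite e1 E eqxx.
    have := Hc2 b2 b2U1; clear -ab2; lia.
  have b1U1 : b1 \in U1 by rewrite in_fsetD1 b1U andbT ne1.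
  have := Hc2 b1 b1U1; clear -ab1; lia.
have y3in : (x + a)%R \in (S2 A `\ (x + c1)%R) `\ (x + c2)%R.
  rewrite !in_fsetD1 inS // !andbT; apply/andP; split; apply/eqP => E.
    by clear -E ac2; lia.
  by clear -E ac2 c21; lia.
have [sub3 E3] := @card_add1 _ _ _ sub2 y3in na.
have L3 := fsubset_leq_card sub3.
by rewrite E1 E2 E3; clear -L3; lia.
Qed.


Lemma pick (A : {fset int}) : (2 <= #|` A|)%N -> exists x : int,
  [/\ (0 < x)%R, (forall a : int, a \in A -> (- x <= a)%R /\ (a <= x)%R) & (x \in A \/ (- x)%R \in A)].
Proof.
move=> cA.
set B := A `|` negS A.
have [c cB Hc] : exists2 c : int, c \in B & forall u : int, u \in B -> (u <= c)%R.
  apply: fset_max.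
  have := fsubset_leq_card (fsubsetUl A (negS A)); rewrite -/B; clear -cA; lia.
have Hb : forall a : int, a \in A -> (- c <= a)%R /\ (a <= c)%R.
  move=> a aA; split.
    have : (- a)%R \in B by rewrite in_fsetU in_negS opprK aA orbT.
    move/Hc; clear; lia.
  by apply: Hc; rewrite in_fsetU aA.
exists c; split => //.
- case: (ltrP 0 c) => // c0; exfalso.
  have sub : A `<=` [fset (0:int)].
    apply/fsubsetP => a aA; have [h1 h2] := Hb a aA; rewrite inE; apply/eqP; clear -h1 h2 c0; lia.
  have := fsubset_leq_card sub; rewrite cardfs1; clear -cA; lia.
- by move: cB; rewrite in_fsetU in_negS => /orP [] ->; [left|right].
Qed.

Lemma wlog_pos (P : {fset int} -> Prop) :
  (forall A, P (negS A) -> P A) ->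
  (forall (A : {fset int}) (x : int), x \in A -> (0 < x)%R -> (forall a : int, a \in A -> (- x <= a)%R /\ (a <= x)%R) -> P A) ->
  forall A, (2 <= #|` A|)%N -> P A.
Proof.
move=> Hneg Hpos A cA.
have [x [xpos Hb [xA|xA]]] := @pick A cA; first exact: (Hpos A x).
apply: Hneg; apply: (Hpos _ x) => //; first by rewrite in_negS.
move=> a; rewrite in_negS => /Hb [h1 h2]; clear -h1 h2; split; lia.
Qed.

Lemma two_le (C : {fset int}) (p q : int) : p \in C -> q \in C -> p != q -> (2 <= #|` C|)%N.
Proof.
move=> pC qC pq.
have sub : [fset p; q] `<=` C.
  by apply/fsubsetP => z; rewrite !inE => /orP [] /eqP ->.
by have := fsubset_leq_card sub; rewrite cardfs2 pq.
Qed.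

Lemma three_le (C : {fset int}) (p q r : int) : p \in C -> q \in C -> r \in C -> p != q -> p != r -> q != r -> (3 <= #|` C|)%N.
Proof.
move=> pC qC rC pq pr qr.
have e : #|` C| = ((r \in C) + #|` C `\ r|)%N := cardfsD1 _ _.
have := @two_le (C `\ r) p q; rewrite !in_fsetD1 pr qr pC qC e rC => /(_ erefl erefl pq).
by clear; lia.
Qed.


Definition Fam1 (A : {fset int}) := exists (c d : int), 0 < d /\ `|c| != d /\ A = [fset c; d; - d].

Lemma card1_elem (U : {fset int}) : #|` U| = 1%N -> exists u : int, forall z : int, (z \in U) = (z == u).
Proof. move/eqP/cardfs1P => [u ->]; exists u => z; by rewrite inE. Qed.

Lemma card2_elem (U : {fset int}) : #|` U| = 2%N -> exists u1 u2 : int, u1 != u2 /\ forall z : int, (z \in U) = (z == u1) || (z == u2).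
Proof.
move=> cU.
have : U != fset0 by apply/eqP => E; move: cU; rewrite E cardfs0.
move/fset0Pn => [u1 u1U].
have e : #|` U| = ((u1 \in U) + #|` U `\ u1|)%N := cardfsD1 _ _.
have [u2 Hu2] : exists u : int, forall z : int, (z \in U `\ u1) = (z == u).
  apply: card1_elem; move: e; rewrite cU u1U; clear; lia.
exists u1, u2; split.
  have := Hu2 u2; rewrite eqxx in_fsetD1 => /andP [h _]; by rewrite eq_sym.
move=> z; case: (altP (z =P u1)) => [->|nz] //=.
by rewrite -Hu2 in_fsetD1 nz.
Qed.

Lemma base3 (A : {fset int}) (x : int) : x \in A -> (0 < x)%R ->
  (forall a : int, a \in A -> (- x <= a)%R /\ (a <= x)%R) -> #|` A| = 3%N ->
  (2 <= #|` S2 A|)%N /\ (#|` S2 A| = 2%N -> Fam1 A).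
Proof.
move=> xA xpos Hb cA.
set U := A `\ x `\ (- x)%R.
have inU : forall z : int, (z \in U) = [&& z != (- x)%R, z != x & z \in A].
  by move=> z; rewrite !in_fsetD1.
have e1 : #|` A| = ((x \in A) + #|` A `\ x|)%N := cardfsD1 _ _.
have e2 : #|` A `\ x| = (((- x)%R \in A `\ x) + #|` U|)%N := cardfsD1 _ _.
have nxx : ((- x)%R != x) by apply/eqP => E; clear -E xpos; lia.
case: (boolP ((- x)%R \in A)) => nxA.
- have [u Hu] : exists u : int, forall z : int, (z \in U) = (z == u).
    apply: card1_elem; move: cA; rewrite e1 e2 xA in_fsetD1 nxx nxA; clear; lia.
  have := Hu u; rewrite eqxx inU => /and3P [un ux uA].
  have [ub1 ub2] := Hb u uA.
  split.
    apply: (@two_le _ (x + u)%R (- x + u)%R).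
    - apply: S2_in => //; first by rewrite eq_sym.
      by apply/eqP => E; clear -E un; lia.
    - apply: S2_in => //; first by rewrite eq_sym.
      by apply/eqP => E; clear -E ux; lia.
    - by apply/eqP => E; clear -E xpos; lia.
  move=> _; exists u, x; split => //; split.
    by rewrite eqr_norml negb_and negb_or ux un.
  apply/fsetP => z; rewrite !inE.
  case: (altP (z =P x)) => [->|zx]; first by rewrite xA; symmetry; apply/orP; left; apply/orP; right.
  case: (altP (z =P (- x)%R)) => [->|znx]; first by rewrite nxA; symmetry; apply/orP; right.
  by rewrite -Hu inU zx znx /= !orbF.
- have [u1 [u2 [u12 Hu]]] : exists u1 u2 : int, u1 != u2 /\ forall z : int, (z \in U) = (z == u1) || (z == u2).
    apply: card2_elem; move: cA; rewrite e1 e2 xA in_fsetD1 nxx (negbTE nxA); clear; lia.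
  have := Hu u1; rewrite eqxx inU /= => /and3P [u1n u1x u1A].
  have := Hu u2; rewrite eqxx orbT inU /= => /and3P [u2n u2x u2A].
  have s1 : (x + u1)%R \in S2 A.
    apply: S2_in => //; first by rewrite eq_sym.
    by apply/eqP => E; clear -E u1n; lia.
  have s2 : (x + u2)%R \in S2 A.
    apply: S2_in => //; first by rewrite eq_sym.
    by apply/eqP => E; clear -E u2n; lia.
  have d12 : (x + u1)%R != (x + u2)%R by apply/eqP => E; clear -E u12; lia.
  split; first exact: two_le s1 s2 d12.
  move=> c2.
  have inA : forall z : int, (z \in A) = [|| z == x, z == u1 | z == u2].
    move=> z; case: (altP (z =P x)) => [->|zx]; first by rewrite xA.
    case: (altP (z =P (- x)%R)) => [->|znx]; first by rewrite (negbTE nxA) /= -Hu inU eqxx.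
    by rewrite -Hu inU zx znx.
  case: (altP (u1 =P (- u2)%R)) => [e|ne].
    case: (ltrP 0 u1) => h.
      exists x, u1; split => //; split.
        by rewrite gtr0_norm // eq_sym.
      apply/fsetP => z; rewrite inA !inE.
      have -> : u2 = (- u1)%R by rewrite e opprK.
      by rewrite orbA.
    exists x, u2; split; first by clear -h e u12; lia.
    split.
      by rewrite gtr0_norm // eq_sym.
    apply/fsetP => z; rewrite inA !inE e orbA.
    by rewrite -!orbA (orbC (z == - u2)).
  have s3 : (u1 + u2)%R \in S2 A by apply: S2_in.
  have := @three_le _ _ _ _ s1 s2 s3 d12.
  rewrite c2.
  have h1 : (x + u1)%R != (u1 + u2)%R by apply/eqP => E; clear -E u2x; lia.
  have h2 : (x + u2)%R != (u1 + u2)%R by apply/eqP => E; clear -E u1x; lia.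
  by move=> /(_ h1 h2).
Qed.

Local Open Scope ring_scope.
Local Open Scope fset_scope.
Local Open Scope ring_scope.


Local Open Scope fset_scope.
Definition Fam2 (A : {fset int}) := (exists (c d : int), 0 < c /\ 0 < d /\ c != d /\ A = [fset c; - c; d; - d]).
Definition Fam3 (A : {fset int}) := (exists (c d : int), 0 < d /\ c != 0 /\ c != 2 * d /\ c != - (2 * d) /\
                            A = [fset d; - d; (c + d)%R; (c - d)%R]).
Definition Fam4 (A : {fset int}) := (exists (d s t : int), d != 0 /\ s <= -1 /\ 1 <= t /\ 4 <= t - s /\
                              A = ap_set d s t).
Definition Fam5 (A : {fset int}) := (exists (d s t : int), d != 0 /\ s <= 0 /\ 1 <= t /\ 4 <= t - s /\
                              A = odd_ap_set d s t).
Definition Fam (A : {fset int}) := Fam1 A \/ Fam2 A \/ Fam3 A \/ Fam4 A \/ Fam5 A.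
Local Open Scope ring_scope.

Lemma in_ap (d s t z : int) : s <= t -> (z \in ap_set d s t) <-> (exists r : int, [/\ s <= r, r <= t & z = r * d]).
Proof.
move=> st; split.
- move/imfsetP => [k kin ->]; move: kin; rewrite ?inE mem_iota => kin.
  exists (s + k%:Z); split => //; lia.
- move=> [r [h1 h2 ->]]; apply/imfsetP; exists (`|r - s|%N).
    rewrite ?inE mem_iota; lia.
  by have -> : s + (`|r - s|%N)%:Z = r by lia.
Qed.

Lemma in_odd (d s t z : int) : s <= t -> (z \in odd_ap_set d s t) <-> (exists r : int, [/\ s <= r, r <= t & z = (2 * r - 1) * d]).
Proof.
move=> st; split.
- move/imfsetP => [k kin ->]; move: kin; rewrite ?inE mem_iota => kin.
  exists (s + k%:Z); split => //; lia.
- move=> [r [h1 h2 ->]]; apply/imfsetP; exists (`|r - s|%N).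
    rewrite ?inE mem_iota; lia.
  by have -> : s + (`|r - s|%N)%:Z = r by lia.
Qed.

Lemma ap_flip (d s t : int) : s <= t -> ap_set d s t = ap_set (- d) (- t) (- s).
Proof.
move=> st; apply/fsetP => z; apply/idP/idP.
- move/(in_ap _ _ _ _ st) => [r [h1 h2 ->]]; apply/in_ap; first lia.
  exists (- r); split; [lia|lia|nia].
- have st' : - t <= - s by lia.
  move/(in_ap _ _ _ _ st') => [r [h1 h2 ->]]; apply/in_ap => //.
  exists (- r); split; [lia|lia|nia].
Qed.

Lemma odd_flip (d s t : int) : s <= t -> odd_ap_set d s t = odd_ap_set (- d) (1 - t) (1 - s).
Proof.
move=> st; apply/fsetP => z; apply/idP/idP.
- move/(in_odd _ _ _ _ st) => [r [h1 h2 ->]]; apply/in_odd; first lia.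
  exists (1 - r); split; [lia|lia|].
  nia.
- have st' : 1 - t <= 1 - s by lia.
  move/(in_odd _ _ _ _ st') => [r [h1 h2 ->]]; apply/in_odd => //.
  exists (1 - r); split; [lia|lia|].
  nia.
Qed.

Lemma neg_ap (d s t : int) : s <= t -> negS (ap_set d s t) = ap_set (- d) s t.
Proof.
move=> st; apply/fsetP => z; rewrite in_negS; apply/idP/idP.
- move/(in_ap _ _ _ _ st) => [r [h1 h2 E]]; apply/in_ap => //.
  exists r; split => //; by rewrite mulrN -E opprK.
- move/(in_ap _ _ _ _ st) => [r [h1 h2 ->]]; apply/in_ap => //.
  exists r; split => //; by rewrite mulrN opprK.
Qed.

Lemma neg_odd (d s t : int) : s <= t -> negS (odd_ap_set d s t) = odd_ap_set (- d) s t.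
Proof.
move=> st; apply/fsetP => z; rewrite in_negS; apply/idP/idP.
- move/(in_odd _ _ _ _ st) => [r [h1 h2 E]]; apply/in_odd => //.
  exists r; split => //; by rewrite mulrN -E opprK.
- move/(in_odd _ _ _ _ st) => [r [h1 h2 ->]]; apply/in_odd => //.
  exists r; split => //; by rewrite mulrN opprK.
Qed.

Lemma Fam_negS (B : {fset int}) : Fam B -> Fam (negS B).
Proof.
case=> [H|[H|[H|[H|H]]]].
- move: H => [c [d [h1 [h2 ->]]]].
  left; exists (- c), d; split => //; split; first by rewrite normrN.
  by apply/fsetP => z; rewrite in_negS !inE; apply/idP/idP; lia.
- move: H => [c [d [h1 [h2 [h3 ->]]]]].
  right; left; exists c, d; split => //; split => //; split => //.
  by apply/fsetP => z; rewrite in_negS !inE; apply/idP/idP; lia.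
- move: H => [c [d [h1 [h2 [h3 [h4 ->]]]]]].
  right; right; left; exists (- c), d; split => //; split; first lia.
  split; first lia. split; first lia.
  by apply/fsetP => z; rewrite in_negS !inE; apply/idP/idP; lia.
- move: H => [d [s [t [h1 [h2 [h3 [h4 ->]]]]]]].
  right; right; right; left; exists (- d), s, t; split; first lia.
  by do 3 (split => //); rewrite neg_ap //; lia.
- move: H => [d [s [t [h1 [h2 [h3 [h4 ->]]]]]]].
  right; right; right; right; exists (- d), s, t; split; first lia.
  by do 3 (split => //); rewrite neg_odd //; lia.
Qed.

Lemma Fam_neg (A : {fset int}) : Fam (negS A) -> Fam A.
Proof. by move/Fam_negS; rewrite negSK. Qed.


Lemma LB (n : nat) : forall A : {fset int}, #|` A| = n -> (3 <= n)%N -> (2 * n - 4 <= #|` S2 A|)%N.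
Proof.
elim: n => [|n IH] A cA n3; first by [].
have c2 : (2 <= #|` A|)%N by rewrite cA; lia.
pose P := fun B : {fset int} => #|` B| = n.+1 -> (2 * n.+1 - 4 <= #|` S2 B|)%N.
suff : P A by apply.
apply: (@wlog_pos P) => //.
  by move=> B; rewrite /P card_negS card_S2_neg.
move=> B x xB xpos Hb cB.
case: (ltnP n 3) => hn.
  have e3 : n = 2%N by lia.
  subst n.
  by have [h _] := @base3 B x xB xpos Hb cB.
have c4 : (4 <= #|` B|)%N by rewrite cB; lia.
have [h _] := @step B x xB xpos Hb c4.
have e : #|` B| = ((x \in B) + #|` B `\ x|)%N := cardfsD1 _ _.
have e' : #|` B `\ x| = n by move: e; rewrite cB xB; clear; lia.
have := IH (B `\ x) e' hn.
by move: h; clear; lia.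
Qed.


Lemma card3_le (a b c : int) : (#|` [fset a; b; c]| <= 3)%N.
Proof.
have h1 := (leq_card_fsetU ([fset a] `|` [fset b]) [fset c]).1.
have h2 := (leq_card_fsetU [fset a] [fset b]).1.
move: h1 h2; rewrite !cardfs1; lia.
Qed.

Lemma card4_le (a b c d : int) : (#|` [fset a; b; c; d]| <= 4)%N.
Proof.
have h1 := (leq_card_fsetU ([fset a] `|` [fset b] `|` [fset c]) [fset d]).1.
have h2 := card3_le a b c.
move: h1 h2; rewrite !cardfs1; lia.
Qed.

Lemma card2_le (a b : int) : (#|` [fset a; b]| <= 2)%N.
Proof. by rewrite cardfs2; case: (a != b). Qed.

Lemma four_le (C : {fset int}) (p q r w : int) : p \in C -> q \in C -> r \in C -> w \in C ->
  p != q -> p != r -> q != r -> p != w -> q != w -> r != w -> (4 <= #|` C|)%N.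
Proof.
move=> pC qC rC wC pq pr qr pw qw rw.
have e : #|` C| = ((w \in C) + #|` C `\ w|)%N := cardfsD1 _ _.
have := @three_le (C `\ w) p q r; rewrite !in_fsetD1 pw qw rw pC qC rC e wC.
by move=> /(_ erefl erefl erefl pq pr qr); clear; lia.
Qed.

Lemma card_ap (d s t : int) : d != 0 -> s <= t -> #|` ap_set d s t| = (`|t - s|.+1)%N.
Proof.
move=> d0 st; rewrite /ap_set card_imfset.
  change (size (undup (iota 0 (absz (t - s)).+1)) = (absz (t - s)).+1); by rewrite undup_id ?iota_uniq // size_iota.
move=> a b E; have := mulIf d0 E; lia.
Qed.

Lemma card_odd (d s t : int) : d != 0 -> s <= t -> #|` odd_ap_set d s t| = (`|t - s|.+1)%N.
Proof.
move=> d0 st; rewrite /odd_ap_set card_imfset.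
  change (size (undup (iota 0 (absz (t - s)).+1)) = (absz (t - s)).+1); by rewrite undup_id ?iota_uniq // size_iota.
move=> a b E; have := mulIf d0 E; lia.
Qed.

Lemma if_dir (A : {fset int}) : (3 <= #|` A|)%N -> Fam A -> #|` S2 A| = (2 * #|` A| - 4)%N.
Proof.
move=> c3 FA.
have lb := @LB _ A (erefl _) c3.
case: FA => [H|[H|[H|[H|H]]]].
- move: H => [c [d [h1 [h2 EA]]]].
  have sub : S2 A `<=` [fset (c + d); (c - d)].
    apply/fsubsetP => z /S2P [u [v [Hu Hv H1 H2 ->]]]; move: Hu Hv; rewrite EA !inE.
    move: H1 H2; clear; lia.
  have := leq_trans (fsubset_leq_card sub) (card2_le (c + d) (c - d)).
  have := card3_le c d (- d); rewrite -EA.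
  move: lb c3; clear; lia.
- move: H => [c [d [h1 [h2 [h3 EA]]]]].
  have sub : S2 A `<=` [fset (c + d); (c - d); (- c + d); (- c - d)].
    apply/fsubsetP => z /S2P [u [v [Hu Hv H1 H2 ->]]]; move: Hu Hv; rewrite EA !inE.
    move: H1 H2; clear; lia.
  have := leq_trans (fsubset_leq_card sub) (card4_le (c + d) (c - d) (- c + d) (- c - d)).
  have := card4_le c (- c) d (- d); rewrite -EA.
  have : (4 <= #|` A|)%N.
    apply: (@four_le _ c (- c) d (- d)); rewrite ?EA ?inE ?eqxx ?orbT //; lia.
  move: lb; clear; lia.
- move: H => [c [d [h1 [h2 [h3 [h4 EA]]]]]].
  have sub : S2 A `<=` [fset (c + 2 * d); c; (c - 2 * d); (2 * c)].
    apply/fsubsetP => z /S2P [u [v [Hu Hv H1 H2 ->]]]; move: Hu Hv; rewrite EA !inE.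
    move: H1 H2; clear; lia.
  have := leq_trans (fsubset_leq_card sub) (card4_le (c + 2 * d) c (c - 2 * d) (2 * c)).
  have := card4_le d (- d) (c + d) (c - d); rewrite -EA.
  have : (4 <= #|` A|)%N.
    apply: (@four_le _ d (- d) (c + d) (c - d)); rewrite ?EA ?inE ?eqxx ?orbT //; lia.
  move: lb; clear; lia.
- move: H => [d [s [t [h1 [h2 [h3 [h4 EA]]]]]]].
  have st : s <= t by lia.
  have st' : 2 * s + 1 <= 2 * t - 1 by lia.
  set E := ap_set d (2 * s + 1) (2 * t - 1).
  have sub : S2 A `<=` E `\ 0.
    apply/fsubsetP => z /S2P [u [v [Hu Hv H1 H2 ->]]].
    rewrite in_fsetD1; apply/andP; split.
      by apply/eqP => E0; move: H2; clear -E0; lia.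
    move: Hu Hv; rewrite EA => /(in_ap _ _ _ _ st) [r1 [a1 a2 eu]] /(in_ap _ _ _ _ st) [r2 [b1 b2 ev]]; subst u v.
    have r12 : r1 != r2 by apply/eqP => E'; move: H1; rewrite E' eqxx.
    apply/(in_ap _ _ _ _ st'); exists (r1 + r2); split; [lia|lia|by rewrite mulrDl].
  have E0 : 0 \in E by apply/(in_ap _ _ _ _ st'); exists 0; split; [lia|lia|by rewrite mul0r].
  have eE : #|` E| = (((0:int) \in E) + #|` E `\ (0:int)|)%N := cardfsD1 _ _.
  have := @card_ap _ _ _ h1 st'; rewrite -/E eE E0 /= add1n => /eq_add_S e1.
  have := fsubset_leq_card sub; rewrite e1.
  have := @card_ap _ _ _ h1 st; rewrite -EA.
  move: lb; move: (#|` A|) (#|` S2 A|) => nA nS.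
  have e2 : (`|(t - s)%R| : int) = t - s by lia.
  have e3 : (`|(2 * t - 1 - (2 * s + 1))%R| : int) = 2 * t - 1 - (2 * s + 1) by lia.
  clear -h2 h3 e2 e3; lia.
- move: H => [d [s [t [h1 [h2 [h3 [h4 EA]]]]]]].
  have st : s <= t by lia.
  have st' : 2 * s <= 2 * t - 2 by lia.
  have d2 : 2 * d != 0 by lia.
  set E := ap_set (2 * d) (2 * s) (2 * t - 2).
  have sub : S2 A `<=` E `\ 0.
    apply/fsubsetP => z /S2P [u [v [Hu Hv H1 H2 ->]]].
    rewrite in_fsetD1; apply/andP; split.
      by apply/eqP => E0; move: H2; clear -E0; lia.
    move: Hu Hv; rewrite EA => /(in_odd _ _ _ _ st) [r1 [a1 a2 eu]] /(in_odd _ _ _ _ st) [r2 [b1 b2 ev]]; subst u v.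
    have r12 : r1 != r2 by apply/eqP => E'; move: H1; rewrite E' eqxx.
    apply/(in_ap _ _ _ _ st'); exists (r1 + r2 - 1); split; [lia|lia|nia].
  have E0 : 0 \in E by apply/(in_ap _ _ _ _ st'); exists 0; split; [lia|lia|by rewrite mul0r].
  have eE : #|` E| = (((0:int) \in E) + #|` E `\ (0:int)|)%N := cardfsD1 _ _.
  have := @card_ap _ _ _ d2 st'; rewrite -/E eE E0 /= add1n => /eq_add_S e1.
  have := fsubset_leq_card sub; rewrite e1.
  have := @card_odd _ _ _ h1 st; rewrite -EA.
  move: lb; move: (#|` A|) (#|` S2 A|) => nA nS.
  have e2 : (`|(t - s)%R| : int) = t - s by lia.
  have e3 : (`|(2 * t - 2 - 2 * s)%R| : int) = 2 * t - 2 - 2 * s by lia.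
  clear -h2 h3 e2 e3; lia.
Qed.


Definition Ecnd (A : {fset int}) (x : int) := forall a b1 b2 : int, a \in A -> b1 \in A -> b2 \in A ->
  a != - x -> b1 != - x -> b2 != - x -> b1 != b2 -> a < b1 -> a < b2 -> (x + a) \in S2 A.

Lemma useE (A : {fset int}) (x a b1 b2 : int) : Ecnd A x -> a \in A -> b1 \in A -> b2 \in A ->
  a != - x -> b1 != - x -> b2 != - x -> b1 != b2 -> a < b1 -> a < b2 ->
  exists u v : int, [/\ u \in A, v \in A, u != v, u != - v & x + a = u + v].
Proof. by move=> H aA b1A b2A h1 h2 h3 h4 h5 h6; move: (H a b1 b2 aA b1A b2A h1 h2 h3 h4 h5 h6) => /S2P. Qed.

Lemma ext1 (A : {fset int}) (x : int) : Fam1 A -> 0 < x -> x \notin A ->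
  (forall a : int, a \in A -> - x <= a /\ a <= x) -> Ecnd A x -> Fam (x |` A).
Proof.
move=> [c [d [d0 [nc EA]]]] xpos xA Hb HE.
have cd : (c != d) && (c != - d).
  by move: nc; rewrite eqr_norml negb_and negb_or (ltW d0) orbF.
have cA : c \in A by rewrite EA !inE eqxx.
have dA : d \in A by rewrite EA !inE eqxx orbT.
have ndA : - d \in A by rewrite EA !inE eqxx !orbT.
have [hc1 hc2] := Hb c cA.
have [hd1 hd2] := Hb d dA.
move: xA; rewrite EA !inE => xA.
case: (altP (c =P - x)) => [ecx|ncx].
  right; left; exists x, d; split => //; split => //; split; first lia.
  by apply/fsetP => z; rewrite !inE; apply/idP/idP; lia.
case: (ltrP c (- d)) => hcd.
  have [u [v [uA vA h1 h2 E]]] : exists u v : int, [/\ u \in A, v \in A, u != v, u != - v & x + c = u + v].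
    by apply: (@useE _ x c d (- d) HE) => //; lia.
  by move: uA vA; rewrite EA !inE; lia.
have [u [v [uA vA h1 h2 E]]] : exists u v : int, [/\ u \in A, v \in A, u != v, u != - v & x + - d = u + v].
  by apply: (@useE _ x (- d) d c HE) => //; lia.
have ex : x = c + 2 * d by move: uA vA; rewrite EA !inE; lia.
right; right; left; exists (c + d), d; split => //; split; first lia.
split; first lia. split; first lia.
by apply/fsetP => z; rewrite !inE; apply/idP/idP; lia.
Qed.

Lemma ap_m1_3 (d : int) : ap_set d (-1) 3 = [fset - d; 0; d; 2 * d; 3 * d].
Proof.
apply/fsetP => z; apply/idP/idP.
- move/(in_ap _ _ _ _ (_ : -1 <= 3)) => /(_ erefl) [r [h1 h2 ->]].
  have : r = -1 \/ r = 0 \/ r = 1 \/ r = 2 \/ r = 3 by lia.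
  by rewrite !inE; case=> [->|[->|[->|[->|->]]]]; lia.
- rewrite !inE => H; apply/in_ap => //.
  have : z = - d \/ z = 0 \/ z = d \/ z = 2 * d \/ z = 3 * d by lia.
  case=> [->|[->|[->|[->|->]]]]; [exists (-1)|exists 0|exists 1|exists 2|exists 3]; split => //; lia.
Qed.

Lemma ap_m2_2 (d : int) : ap_set d (-2) 2 = [fset - (2 * d); - d; 0; d; 2 * d].
Proof.
apply/fsetP => z; apply/idP/idP.
- move/(in_ap _ _ _ _ (_ : -2 <= 2)) => /(_ erefl) [r [h1 h2 ->]].
  have : r = -2 \/ r = -1 \/ r = 0 \/ r = 1 \/ r = 2 by lia.
  by rewrite !inE; case=> [->|[->|[->|[->|->]]]]; lia.
- rewrite !inE => H; apply/in_ap => //.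
  have : z = - (2 * d) \/ z = - d \/ z = 0 \/ z = d \/ z = 2 * d by lia.
  case=> [->|[->|[->|[->|->]]]]; [exists (-2)|exists (-1)|exists 0|exists 1|exists 2]; split => //; lia.
Qed.

Lemma odd_m1_3 (d : int) : odd_ap_set d (-1) 3 = [fset - (3 * d); - d; d; 3 * d; 5 * d].
Proof.
apply/fsetP => z; apply/idP/idP.
- move/(in_odd _ _ _ _ (_ : -1 <= 3)) => /(_ erefl) [r [h1 h2 ->]].
  have : r = -1 \/ r = 0 \/ r = 1 \/ r = 2 \/ r = 3 by lia.
  by rewrite !inE; case=> [->|[->|[->|[->|->]]]]; lia.
- rewrite !inE => H; apply/in_odd => //.
  have : z = - (3 * d) \/ z = - d \/ z = d \/ z = 3 * d \/ z = 5 * d by lia.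
  case=> [->|[->|[->|[->|->]]]]; [exists (-1)|exists 0|exists 1|exists 2|exists 3]; split => //; lia.
Qed.

Lemma odd_0_4 (d : int) : odd_ap_set d 0 4 = [fset - d; d; 3 * d; 5 * d; 7 * d].
Proof.
apply/fsetP => z; apply/idP/idP.
- move/(in_odd _ _ _ _ (_ : 0 <= 4)) => /(_ erefl) [r [h1 h2 ->]].
  have : r = 0 \/ r = 1 \/ r = 2 \/ r = 3 \/ r = 4 by lia.
  by rewrite !inE; case=> [->|[->|[->|[->|->]]]]; lia.
- rewrite !inE => H; apply/in_odd => //.
  have : z = - d \/ z = d \/ z = 3 * d \/ z = 5 * d \/ z = 7 * d by lia.
  case=> [->|[->|[->|[->|->]]]]; [exists 0|exists 1|exists 2|exists 3|exists 4]; split => //; lia.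
Qed.

Lemma ext2 (A : {fset int}) (x : int) : Fam2 A -> 0 < x -> x \notin A ->
  (forall a : int, a \in A -> - x <= a /\ a <= x) -> Ecnd A x -> Fam (x |` A).
Proof.
move=> [c [d [c0 [d0 [ncd EA]]]]] xpos xA Hb HE.
have cA : c \in A by rewrite EA !inE eqxx.
have ncA : - c \in A by rewrite EA !inE eqxx !orbT.
have dA : d \in A by rewrite EA !inE eqxx !orbT.
have ndA : - d \in A by rewrite EA !inE eqxx !orbT.
have [hc1 hc2] := Hb c cA.
have [hd1 hd2] := Hb d dA.
move: (xA); rewrite EA !inE => xA'.
have [u [v [uA vA h1 h2 E]]] : exists u v : int, [/\ u \in A, v \in A, u != v, u != - v & x + - c = u + v].
  by apply: (@useE _ x (- c) c d HE) => //; lia.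
have [u' [v' [uA' vA' h1' h2' E']]] : exists u v : int, [/\ u \in A, v \in A, u != v, u != - v & x + - d = u + v].
  by apply: (@useE _ x (- d) c d HE) => //; lia.
move: uA vA uA' vA'; rewrite EA !inE => uA vA uA' vA'.
have xc : x != c by apply/eqP => e; move: xA'; rewrite e eqxx.
have xd : x != d by apply/eqP => e; move: xA'; rewrite e eqxx !orbT.
have e1 : x = 2 * c + d \/ x = 2 * c - d.
  by clear -uA vA h1 h2 E c0 d0 hc2 xc xd; lia.
have e2 : x = 2 * d + c \/ x = 2 * d - c.
  by clear -uA' vA' h1' h2' E' c0 d0 hd2 xc xd; lia.
case: (ltrP c d) => hcd.
  have [ex ed] : x = 5 * c /\ d = 3 * c by clear -e1 e2 hcd hc2 xc c0 d0; lia.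
  right; right; right; right; exists c, (-1), 3; split; first lia.
  do 3 (split; first lia).
  rewrite odd_m1_3; apply/fsetP => z; rewrite !inE ex ed.
  by clear; apply/idP/idP; lia.
have [ex ed] : x = 5 * d /\ c = 3 * d by clear -e1 e2 hcd hd2 xd ncd c0 d0; lia.
right; right; right; right; exists d, (-1), 3; split; first lia.
do 3 (split; first lia).
rewrite odd_m1_3; apply/fsetP => z; rewrite !inE ex ed.
by clear; apply/idP/idP; lia.
Qed.

Lemma sum3 (A : {fset int}) (c d w : int) : A = [fset d; - d; (c + d)%R; (c - d)%R] ->
  0 < d -> c != 0 -> c != 2 * d -> c != - (2 * d) ->
  (exists u v : int, [/\ u \in A, v \in A, u != v, u != - v & w = u + v]) ->
  w = c + 2 * d \/ w = c \/ w = c - 2 * d \/ w = 2 * c.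
Proof.
move=> EA d0 h1 h2 h3 [u [v [uA vA n1 n2 E]]]; move: uA vA; rewrite EA !inE => uA vA.
by clear -uA vA n1 n2 E d0 h1 h2 h3; lia.
Qed.

Lemma ext3 (A : {fset int}) (x : int) : Fam3 A -> 0 < x -> x \notin A ->
  (forall a : int, a \in A -> - x <= a /\ a <= x) -> Ecnd A x -> Fam (x |` A).
Proof.
move=> [c [d [d0 [c0 [c2 [c3 EA]]]]]] xpos xA Hb HE.
have dA : d \in A by rewrite EA !inE eqxx.
have ndA : - d \in A by rewrite EA !inE eqxx !orbT.
have cpA : c + d \in A by rewrite EA !inE eqxx !orbT.
have cmA : c - d \in A by rewrite EA !inE eqxx !orbT.
have [hd1 hd2] := Hb d dA.
have [hp1 hp2] := Hb _ cpA.
have [hm1 hm2] := Hb _ cmA.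
move: (xA); rewrite EA !inE => xA'.
have xd : x != d by apply/eqP => e; move: xA'; rewrite e eqxx.
have xp : x != c + d by apply/eqP => e; move: xA'; rewrite e eqxx !orbT.
have S : forall w : int, (exists u v : int, [/\ u \in A, v \in A, u != v, u != - v & w = u + v]) -> w = c + 2 * d \/ w = c \/ w = c - 2 * d \/ w = 2 * c.
  by move=> w; apply: (@sum3 A c d w EA d0 c0 c2 c3).
case: (ltrP 0 c) => hc.
  case: (ltrP c (2 * d)) => hc2.
    have e1 := S (x + - d) (@useE _ x (- d) (c + d) d HE ndA cpA dA ltac:(lia) ltac:(lia) ltac:(lia) ltac:(lia) ltac:(lia) ltac:(lia)).
    have e2 := S (x + (c - d)) (@useE _ x (c - d) (c + d) d HE cmA cpA dA ltac:(lia) ltac:(lia) ltac:(lia) ltac:(lia) ltac:(lia) ltac:(lia)).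
    have [ex ec] : x = 3 * d /\ c = d by clear -e1 e2 hc hc2 hp2 xp d0 c0; lia.
    right; right; right; left; exists d, (-1), 3; split; first lia.
    do 3 (split; first lia).
    rewrite ap_m1_3; apply/fsetP => z; rewrite !inE ex ec.
    by clear; apply/idP/idP; lia.
  have hc2' : 2 * d < c by move: c2 hc2; clear; lia.
  have e1 := S (x + - d) (@useE _ x (- d) (c + d) (c - d) HE ndA cpA cmA ltac:(lia) ltac:(lia) ltac:(lia) ltac:(lia) ltac:(lia) ltac:(lia)).
  have e2 := S (x + d) (@useE _ x d (c + d) (c - d) HE dA cpA cmA ltac:(lia) ltac:(lia) ltac:(lia) ltac:(lia) ltac:(lia) ltac:(lia)).
  have [ex ec] : x = 7 * d /\ c = 4 * d by clear -e1 e2 hc hc2' hp2 xp d0 c0; lia.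
  right; right; right; right; exists d, 0, 4; split; first lia.
  do 3 (split; first lia).
  rewrite odd_0_4; apply/fsetP => z; rewrite !inE ex ec.
  by clear; apply/idP/idP; lia.
have hc' : c < 0 by move: c0 hc; clear; lia.
case: (altP (x =P d - c)) => [ex|nx].
  case: (ltrP c (- (2 * d))) => hc2.
    have e1 := S (x + (c + d)) (@useE _ x (c + d) d (- d) HE cpA dA ndA ltac:(lia) ltac:(lia) ltac:(lia) ltac:(lia) ltac:(lia) ltac:(lia)).
    by exfalso; clear -e1 ex hc2 d0; lia.
  have hc2' : - (2 * d) < c by move: c3 hc2; clear; lia.
  have e1 := S (x + - d) (@useE _ x (- d) d (c + d) HE ndA dA cpA ltac:(lia) ltac:(lia) ltac:(lia) ltac:(lia) ltac:(lia) ltac:(lia)).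
  have ec : c = - d by clear -e1 ex hc' hc2' d0; lia.
  right; right; right; left; exists d, (-2), 2; split; first lia.
  do 3 (split; first lia).
  rewrite ap_m2_2; apply/fsetP => z; rewrite !inE ex ec.
  by clear; apply/idP/idP; lia.
have xgt : d - c < x by move: nx hm1; clear; lia.
have e1 := S (x + (c - d)) (@useE _ x (c - d) d (c + d) HE cmA dA cpA ltac:(lia) ltac:(lia) ltac:(lia) ltac:(lia) ltac:(lia) ltac:(lia)).
case: (ltrP c (- (2 * d))) => hc2.
  by exfalso; clear -e1 xgt hc2 hc' d0; lia.
have ex : x = 3 * d by clear -e1 xgt hc2 hc' d0 c3; lia.
have e2 := S (x + - d) (@useE _ x (- d) d (c + d) HE ndA dA cpA ltac:(lia) ltac:(lia) ltac:(lia) ltac:(lia) ltac:(lia) ltac:(lia)).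
by exfalso; clear -e2 ex hc' hc2 d0 c3; lia.
Qed.

Lemma ext4pos (x d s t : int) : 0 < d -> s <= -1 -> 1 <= t -> 4 <= t - s -> 0 < x -> x \notin ap_set d s t ->
  (forall a : int, a \in ap_set d s t -> - x <= a /\ a <= x) -> Ecnd (ap_set d s t) x -> Fam (x |` ap_set d s t).
Proof.
move=> d0 hs ht hts xpos xA Hb HE.
have st : s <= t by lia.
have mem : forall r, s <= r -> r <= t -> r * d \in ap_set d s t.
  by move=> r h1 h2; apply/(in_ap _ _ _ _ st); exists r.
have [hs1 _] := Hb _ (mem s (lexx _) st).
have [_ ht2] := Hb _ (mem t st (lexx _)).
have xt : x != t * d by apply: contraNneq xA => ->; apply: mem.
have l1 : s * d < (t - 2) * d by nia.
have m1 := mem (t - 2) ltac:(lia) ltac:(lia).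
have m2 := mem t ltac:(lia) ltac:(lia).
have m3 := mem (t - 1) ltac:(lia) ltac:(lia).
have q1 : (t - 2) * d != - x by lia.
have q2 : t * d != - x by nia.
have q3 : (t - 1) * d != - x by nia.
have q4 : t * d != (t - 1) * d by nia.
have q5 : (t - 2) * d < t * d by nia.
have q6 : (t - 2) * d < (t - 1) * d by nia.
have [u [v [uA vA h1 h2 E]]] := @useE _ x ((t - 2) * d) (t * d) ((t - 1) * d) HE m1 m2 m3 q1 q2 q3 q4 q5 q6.
move: uA vA => /(in_ap _ _ _ _ st) [r1 [a1 a2 eu]] /(in_ap _ _ _ _ st) [r2 [b1 b2 ev]]; subst u v.
have r12 : r1 != r2 by apply/eqP => E'; move: h1; rewrite E' eqxx.
have hx : x = (r1 + r2 - t + 2) * d by lia.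
have hm : t < r1 + r2 - t + 2 by nia.
have ex : x = (t + 1) * d by rewrite hx; congr (_ * _); lia.
right; right; right; left; exists d, s, (t + 1); split; first lia.
do 3 (split; first lia).
have st' : s <= t + 1 by lia.
apply/fsetP => z; rewrite !inE; apply/idP/idP.
- case/orP => [/eqP ->|/(in_ap _ _ _ _ st) [r [c1 c2 ->]]]; apply/(in_ap _ _ _ _ st').
    by exists (t + 1); split => //; lia.
  by exists r; split => //; lia.
- move/(in_ap _ _ _ _ st') => [r [c1 c2 ->]].
  case: (altP (r =P t + 1)) => [->|nr]; first by rewrite -ex eqxx.
  by apply/orP; right; apply: mem => //; lia.
Qed.

Lemma ext5pos (x d s t : int) : 0 < d -> s <= 0 -> 1 <= t -> 4 <= t - s -> 0 < x -> x \notin odd_ap_set d s t ->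
  (forall a : int, a \in odd_ap_set d s t -> - x <= a /\ a <= x) -> Ecnd (odd_ap_set d s t) x -> Fam (x |` odd_ap_set d s t).
Proof.
move=> d0 hs ht hts xpos xA Hb HE.
have st : s <= t by lia.
have mem : forall r, s <= r -> r <= t -> (2 * r - 1) * d \in odd_ap_set d s t.
  by move=> r h1 h2; apply/(in_odd _ _ _ _ st); exists r.
have [hs1 _] := Hb _ (mem s (lexx _) st).
have [_ ht2] := Hb _ (mem t st (lexx _)).
have xt : x != (2 * t - 1) * d by apply: contraNneq xA => ->; apply: mem.
have l1 : (2 * s - 1) * d < (2 * (t - 2) - 1) * d by nia.
have m1 := mem (t - 2) ltac:(lia) ltac:(lia).
have m2 := mem t ltac:(lia) ltac:(lia).
have m3 := mem (t - 1) ltac:(lia) ltac:(lia).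
have q1 : (2 * (t - 2) - 1) * d != - x by lia.
have q2 : (2 * t - 1) * d != - x by nia.
have q3 : (2 * (t - 1) - 1) * d != - x by nia.
have q4 : (2 * t - 1) * d != (2 * (t - 1) - 1) * d by nia.
have q5 : (2 * (t - 2) - 1) * d < (2 * t - 1) * d by nia.
have q6 : (2 * (t - 2) - 1) * d < (2 * (t - 1) - 1) * d by nia.
have [u [v [uA vA h1 h2 E]]] := @useE _ x _ _ _ HE m1 m2 m3 q1 q2 q3 q4 q5 q6.
move: uA vA => /(in_odd _ _ _ _ st) [r1 [a1 a2 eu]] /(in_odd _ _ _ _ st) [r2 [b1 b2 ev]]; subst u v.
have r12 : r1 != r2 by apply/eqP => E'; move: h1; rewrite E' eqxx.
have hx : x = (2 * (r1 + r2 - t) + 3) * d by lia.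
have hm : 2 * t - 1 < 2 * (r1 + r2 - t) + 3 by nia.
have ex : x = (2 * (t + 1) - 1) * d by rewrite hx; congr (_ * _); lia.
right; right; right; right; exists d, s, (t + 1); split; first lia.
do 3 (split; first lia).
have st' : s <= t + 1 by lia.
apply/fsetP => z; rewrite !inE; apply/idP/idP.
- case/orP => [/eqP ->|/(in_odd _ _ _ _ st) [r [c1 c2 ->]]]; apply/(in_odd _ _ _ _ st').
    by exists (t + 1); split => //; lia.
  by exists r; split => //; lia.
- move/(in_odd _ _ _ _ st') => [r [c1 c2 ->]].
  case: (altP (r =P t + 1)) => [->|nr]; first by rewrite -ex eqxx.
  by apply/orP; right; apply: mem => //; lia.
Qed.

Lemma ext4 (A : {fset int}) (x : int) : Fam4 A -> 0 < x -> x \notin A ->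
  (forall a : int, a \in A -> - x <= a /\ a <= x) -> Ecnd A x -> Fam (x |` A).
Proof.
move=> [d [s [t [d0 [hs [ht [hts EA]]]]]]]; subst A.
case: (ltrP 0 d) => hd; first exact: ext4pos.
rewrite ap_flip; last by lia.
apply: ext4pos; lia.
Qed.

Lemma ext5 (A : {fset int}) (x : int) : Fam5 A -> 0 < x -> x \notin A ->
  (forall a : int, a \in A -> - x <= a /\ a <= x) -> Ecnd A x -> Fam (x |` A).
Proof.
move=> [d [s [t [d0 [hs [ht [hts EA]]]]]]]; subst A.
case: (ltrP 0 d) => hd; first exact: ext5pos.
rewrite odd_flip; last by lia.
apply: ext5pos; lia.
Qed.

Lemma ext (A : {fset int}) (x : int) : Fam A -> 0 < x -> x \notin A ->
  (forall a : int, a \in A -> - x <= a /\ a <= x) -> Ecnd A x -> Fam (x |` A).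
Proof.
case=> [H|[H|[H|[H|H]]]]; [exact: ext1|exact: ext2|exact: ext3|exact: ext4|exact: ext5].
Qed.


Lemma classify (n : nat) : forall A : {fset int}, #|` A| = n -> (3 <= n)%N ->
  #|` S2 A| = (2 * n - 4)%N -> Fam A.
Proof.
elim: n => [|n IH] A cA n3; first by [].
have c2 : (2 <= #|` A|)%N by rewrite cA; lia.
pose P := fun B : {fset int} => #|` B| = n.+1 -> #|` S2 B| = (2 * n.+1 - 4)%N -> Fam B.
suff : P A by apply.
apply: (@wlog_pos P) => //.
  move=> B HB cB sB; apply: Fam_neg; apply: HB.
    by rewrite card_negS.
  by rewrite card_S2_neg.
move=> B x xB xpos Hb cB sB.
case: (ltnP n 3) => hn.
  have e3 : n = 2%N by lia.
  subst n.
  have [_ h] := @base3 B x xB xpos Hb cB.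
  by left; apply: h.
have c4 : (4 <= #|` B|)%N by rewrite cB; lia.
have [h2 hE] := @step B x xB xpos Hb c4.
have e : #|` B| = ((x \in B) + #|` B `\ x|)%N := cardfsD1 _ _.
have e' : #|` B `\ x| = n by move: e; rewrite cB xB; clear; lia.
have lb := @LB n (B `\ x) e' hn.
have sB' : #|` S2 (B `\ x)| = (2 * n - 4)%N by move: h2 lb; rewrite sB; clear -hn; lia.
have FB' := IH (B `\ x) e' hn sB'.
rewrite -(fsetD1K xB).
apply: ext => //.
- by rewrite in_fsetD1 eqxx.
- by move=> a; rewrite in_fsetD1 => /andP [_ /Hb].
- move=> a b1 b2 aA b1A b2A h1 h3 h4 h5 h6 h7.
  apply/negPn/negP => na.
  have := hE a b1 b2 aA b1A b2A h1 h3 h4 h5 h6 h7 na.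
  by rewrite sB sB'; clear -hn; lia.
Qed.

Lemma main_iff (A : {fset int}) : (3 <= #|` A|)%N -> (#|` S2 A| = (2 * #|` A| - 4)%N <-> Fam A).
Proof.
move=> c3; split.
- by move=> h; apply: (@classify _ A erefl c3 h).
- exact: if_dir.
Qed.

Local Open Scope fset_scope.

Theorem theorem1p3 (A : {fset int}) :
  (3 <= #|` A|)%N ->
  ((#|` restricted_sumset 2 A| = 2 * #|` A| - 4)%N <->
   (exists (c d : int), 0 < d /\ `|c| != d /\ A = [fset c; d; - d]) \/
       (exists (c d : int), 0 < c /\ 0 < d /\ c != d /\ A = [fset c; - c; d; - d]) \/
       (exists (c d : int), 0 < d /\ c != 0 /\ c != 2 * d /\ c != - (2 * d) /\
                            A = [fset d; - d; (c + d)%R; (c - d)%R]) \/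
       (exists (d s t : int), d != 0 /\ s <= -1 /\ 1 <= t /\ 4 <= t - s /\
                              A = ap_set d s t) \/
       (exists (d s t : int), d != 0 /\ s <= 0 /\ 1 <= t /\ 4 <= t - s /\
                              A = odd_ap_set d s t)).
Proof.
move=> c3; exact (main_iff A c3).
Qed.
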